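(* Let $G$ be a finite simple undirected graph on $n\ge 3$ vertices, and let $\lambda_1(G)\ge \lambda_2(G)\ge\cdots\ge\lambda_n(G)$ be the eigenvalues of its adjacency matrix. Then \[ \lambda_3(G)\le \frac{n}{3}-1. \] *)

(* Defs.v *)
From HB Require Import structures.
From mathcomp Require Import all_boot all_order all_algebra.
From mathcomp Require Import reals.
Set Implicit Arguments. Unset Strict Implicit. Unset Printing Implicit Defensive.
Import Order.TTheory GRing.Theory Num.Theory.
Local Open Scope ring_scope.

Definition simple_graph (n : nat) (e : rel 'I_n) : Prop :=
  symmetric e /\ irreflexive e.

Definition adjmx (R : pzRingType) (n : nat) (e : rel 'I_n) : 'M[R]_n :=
  \matrix_(i, j) (e i j)%:R.

(* s is the list of eigenvalues of A, counted with (algebraic) multiplicity,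
   in non-increasing order: lambda_1 >= lambda_2 >= ... >= lambda_n. *)
Definition eigenvalues_desc (R : realDomainType) (n : nat) (A : 'M[R]_n)
    (s : seq R) : Prop :=
  sorted (>=%R) s /\ char_poly A = \prod_(x <- s) ('X - x%:P).

(* Main.v *)
Require Import Defs.
From HB Require Import structures.
From mathcomp Require Import all_boot all_order all_algebra.
From mathcomp Require Import reals.
From mathcomp.algebra_tactics Require Import ring lra.
Import Order.TTheory GRing.Theory Num.Theory.
Local Open Scope ring_scope.

Module Aux.
Set Implicit Arguments. Unset Strict Implicit.

Section Key.
Variable R : realType.

Lemma poly_ineq_pos (t : R) : 0 <= t -> t ^+ 2 <= 1 ->
  t <= 2/3 + 7/18 * (2 * t^+2 - 1) - 1/18 * (8 * t^+4 - 8 * t^+2 + 1).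
Proof.
move=> h0 h1.
have hle : t <= 1 by nra.
have key : 0 <= (2 * t - 1) ^+ 2 * ((1 - t) * (t + 2)).
  apply: mulr_ge0; first exact: sqr_ge0.
  apply: mulr_ge0; lra.
nra.
Qed.

Lemma poly_ineq (c : R) : c ^+ 2 <= 1 ->
  `|c| <= 2/3 + 7/18 * (2 * c^+2 - 1) - 1/18 * (8 * c^+4 - 8 * c^+2 + 1).
Proof.
move=> hc; case: (lerP 0 c) => h.
  by rewrite ger0_norm //; apply: poly_ineq_pos.
rewrite ltr0_norm //.
have := @poly_ineq_pos (- c); rewrite !sqrrN.
have -> : (- c) ^+ 4 = c ^+ 4 by by rewrite (_ : 4 = 2 * 2)%N // !exprM sqrrN.
 move=> H; apply: H => //; lra.
Qed.

End Key.


Section Key2.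
Variable R : realType.
Implicit Types x y : R.

Definition nrm x y : R := Num.sqrt (x ^+ 2 + y ^+ 2).
Definition ca x y : R := x / nrm x y.
Definition sa x y : R := y / nrm x y.
Definition P1 x y : R := ca x y ^+ 2 - sa x y ^+ 2.
Definition Q1 x y : R := 2 * ca x y * sa x y.
Definition V1 x y : R := nrm x y * P1 x y.
Definition V2 x y : R := nrm x y * Q1 x y.
Definition W1 x y : R := nrm x y * (P1 x y ^+ 2 - Q1 x y ^+ 2).
Definition W2 x y : R := nrm x y * (2 * P1 x y * Q1 x y).

Lemma nrm_ge0 x y : 0 <= nrm x y.
Proof. exact: sqrtr_ge0. Qed.

Lemma nrm_sq x y : nrm x y ^+ 2 = x ^+ 2 + y ^+ 2.
Proof. by rewrite sqr_sqrtr // addr_ge0 // sqr_ge0. Qed.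

Lemma nrm0 x y : nrm x y = 0 -> x = 0 /\ y = 0.
Proof.
move=> h; have := nrm_sq x y; rewrite h expr0n /= => /esym /eqP.
rewrite paddr_eq0 ?sqr_ge0 // !sqrf_eq0 => /andP[/eqP -> /eqP ->]; by [].
Qed.

Arguments nrm0 {x y}.

Lemma ca_eq x y : x = nrm x y * ca x y.
Proof.
rewrite /ca; have [h|h] := eqVneq (nrm x y) 0.
  by rewrite h mul0r; case: (nrm0 h).
by rewrite mulrC divfK.
Qed.

Lemma sa_eq x y : y = nrm x y * sa x y.
Proof.
rewrite /sa; have [h|h] := eqVneq (nrm x y) 0.
  by rewrite h mul0r; case: (nrm0 h).
by rewrite mulrC divfK.
Qed.

Lemma casa1 x y : nrm x y != 0 -> ca x y ^+ 2 + sa x y ^+ 2 = 1.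
Proof.
move=> h; rewrite /ca /sa !expr_div_n -mulrDl -nrm_sq divff //.
by rewrite expf_neq0.
Qed.
Arguments casa1 {x y}.

Lemma PQ1 x y : nrm x y != 0 -> P1 x y ^+ 2 + Q1 x y ^+ 2 = 1.
Proof.
move=> h; have := casa1 h; rewrite /P1 /Q1 => e.
have -> : (ca x y ^+ 2 - sa x y ^+ 2) ^+ 2 + (2 * ca x y * sa x y) ^+ 2
   = (ca x y ^+ 2 + sa x y ^+ 2) ^+ 2 by ring.
by rewrite e expr1n.
Qed.
Arguments PQ1 {x y}.

Lemma rV1 x y : nrm x y * V1 x y = x ^+ 2 - y ^+ 2.
Proof.
rewrite /V1 /P1.
have -> : nrm x y * (nrm x y * (ca x y ^+ 2 - sa x y ^+ 2))
  = (nrm x y * ca x y) ^+ 2 - (nrm x y * sa x y) ^+ 2 by ring.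
by rewrite -ca_eq -sa_eq.
Qed.

Lemma rV2 x y : nrm x y * V2 x y = 2 * (x * y).
Proof.
rewrite /V2 /Q1.
have -> : nrm x y * (nrm x y * (2 * ca x y * sa x y))
  = 2 * ((nrm x y * ca x y) * (nrm x y * sa x y)) by ring.
by rewrite -ca_eq -sa_eq.
Qed.

Lemma pairwise x1 y1 x2 y2 :
  `|x1 * x2 + y1 * y2| <= 2/3 * (nrm x1 y1 * nrm x2 y2)
     + 7/18 * (V1 x1 y1 * V1 x2 y2 + V2 x1 y1 * V2 x2 y2)
     - 1/18 * (W1 x1 y1 * W1 x2 y2 + W2 x1 y1 * W2 x2 y2).
Proof.
have [h1|h1] := eqVneq (nrm x1 y1) 0.
  rewrite /V1 /V2 /W1 /W2 h1; case: (nrm0 h1) => -> ->; rewrite !mul0r !mulr0 !add0r.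
  by rewrite normr0 !mulr0 ?addr0 ?subr0 ?subrr.
have [h2|h2] := eqVneq (nrm x2 y2) 0.
  rewrite /V1 /V2 /W1 /W2 h2; case: (nrm0 h2) => -> ->; rewrite !mul0r !mulr0 !add0r.
  by rewrite normr0 !mulr0 ?addr0 ?subr0 ?subrr.
have e1 := casa1 h1; have e2 := casa1 h2.
have f1 := PQ1 h1; have f2 := PQ1 h2.
rewrite /V1 /V2 /W1 /W2.
have hx1 := ca_eq x1 y1; have hy1 := sa_eq x1 y1.
have hx2 := ca_eq x2 y2; have hy2 := sa_eq x2 y2.
set r1 := nrm x1 y1; set r2 := nrm x2 y2.
set a1 := ca x1 y1; set b1 := sa x1 y1; set a2 := ca x2 y2; set b2 := sa x2 y2.
set p1 := P1 x1 y1; set q1 := Q1 x1 y1; set p2 := P1 x2 y2; set q2 := Q1 x2 y2.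
have hp1 : p1 = a1 ^+ 2 - b1 ^+ 2 by [].
have hq1 : q1 = 2 * a1 * b1 by [].
have hp2 : p2 = a2 ^+ 2 - b2 ^+ 2 by [].
have hq2 : q2 = 2 * a2 * b2 by [].
set c := a1 * a2 + b1 * b2.
have E : 1 = (a1 ^+ 2 + b1 ^+ 2) * (a2 ^+ 2 + b2 ^+ 2) by rewrite e1 e2 mulr1.
have hv : p1 * p2 + q1 * q2 = 2 * c ^+ 2 - 1.
  have -> : p1 * p2 + q1 * q2 = 2 * c ^+ 2 - (a1 ^+ 2 + b1 ^+ 2) * (a2 ^+ 2 + b2 ^+ 2).
    by rewrite hp1 hp2 hq1 hq2 /c; ring.
  by rewrite -E.
have hw : (p1 ^+ 2 - q1 ^+ 2) * (p2 ^+ 2 - q2 ^+ 2) + (2 * p1 * q1) * (2 * p2 * q2)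
          = 8 * c ^+ 4 - 8 * c ^+ 2 + 1.
  have -> : (p1 ^+ 2 - q1 ^+ 2) * (p2 ^+ 2 - q2 ^+ 2) + (2 * p1 * q1) * (2 * p2 * q2)
     = 2 * (p1 * p2 + q1 * q2) ^+ 2 - (p1 ^+ 2 + q1 ^+ 2) * (p2 ^+ 2 + q2 ^+ 2) by ring.
  by rewrite hv f1 f2; ring.
have hc : c ^+ 2 <= 1.
  have : c ^+ 2 + (a1 * b2 - a2 * b1) ^+ 2 = 1.
    by rewrite E /c; ring.
  move=> E2; rewrite -E2 lerDl; exact: sqr_ge0.
have -> : x1 * x2 + y1 * y2 = (r1 * r2) * c.
  by rewrite /r1 /r2 /c /a1 /a2 /b1 /b2 /ca /sa; field; apply/andP; split.
have -> : 2 / 3 * (r1 * r2) + 7 / 18 * (r1 * p1 * (r2 * p2) + r1 * q1 * (r2 * q2)) -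
  1 / 18 * (r1 * (p1 ^+ 2 - q1 ^+ 2) * (r2 * (p2 ^+ 2 - q2 ^+ 2)) +
          r1 * (2 * p1 * q1) * (r2 * (2 * p2 * q2)))
  = (r1 * r2) * (2/3 + 7/18 * (p1 * p2 + q1 * q2) - 1/18 * ((p1 ^+ 2 - q1 ^+ 2) * (p2 ^+ 2 - q2 ^+ 2) + (2 * p1 * q1) * (2 * p2 * q2))) by ring.
rewrite hv hw normrM (ger0_norm (mulr_ge0 (nrm_ge0 _ _) (nrm_ge0 _ _))).
apply: ler_wpM2l; first exact: mulr_ge0 (nrm_ge0 _ _) (nrm_ge0 _ _).
exact: poly_ineq.
Qed.

End Key2.


Section Key3.
Variable R : realType.
Variable n : nat.
Implicit Types f g : 'I_n -> R.

Lemma dsum_prod f g : \sum_i \sum_j f i * g j = (\sum_i f i) * (\sum_j g j).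
Proof. by rewrite mulr_suml; apply: eq_bigr => i _; rewrite mulr_sumr. Qed.

Lemma dsum_lin (f g1 g2 h1 h2 : 'I_n -> R) (a b c : R) :
  \sum_i \sum_j (a * (f i * f j) + b * (g1 i * g1 j + g2 i * g2 j)
                  - c * (h1 i * h1 j + h2 i * h2 j))
  = a * (\sum_i f i) ^+ 2 + b * ((\sum_i g1 i) ^+ 2 + (\sum_i g2 i) ^+ 2)
    - c * ((\sum_i h1 i) ^+ 2 + (\sum_i h2 i) ^+ 2).
Proof.
have E : forall i j, a * (f i * f j) + b * (g1 i * g1 j + g2 i * g2 j)
                  - c * (h1 i * h1 j + h2 i * h2 j)
  = a * (f i * f j) + b * (g1 i * g1 j) + b * (g2 i * g2 j)
    - c * (h1 i * h1 j) - c * (h2 i * h2 j) by move=> i j; ring.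
under eq_bigr => i _ do (under eq_bigr => j _ do rewrite E).
under eq_bigr => i _ do rewrite !sumrB !big_split /= -!mulr_sumr.
rewrite !sumrB !big_split /= -!mulr_sumr -!mulr_suml !expr2; ring.
Qed.

End Key3.

Section Key4.
Variable R : realType.
Variable n : nat.

Lemma sumT (x y : 'I_n -> R) : \sum_i x i ^+ 2 = 1 -> \sum_i y i ^+ 2 = 1 ->
  \sum_i x i * y i = 0 ->
  \sum_i \sum_j `|x i * x j + y i * y j| <= 4/3 * n%:R.
Proof.
move=> hx hy hxy.
pose r i := nrm (x i) (y i).
pose v1 i := V1 (x i) (y i). pose v2 i := V2 (x i) (y i).
pose w1 i := W1 (x i) (y i). pose w2 i := W2 (x i) (y i).
pose p i := P1 (x i) (y i). pose q i := Q1 (x i) (y i).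
have step1 : \sum_i \sum_j `|x i * x j + y i * y j| <=
   \sum_i \sum_j (2/3 * (r i * r j) + 7/18 * (v1 i * v1 j + v2 i * v2 j)
                  - 1/18 * (w1 i * w1 j + w2 i * w2 j)).
  by apply: ler_sum => i _; apply: ler_sum => j _; apply: pairwise.
rewrite dsum_lin in step1.
set S := \sum_i r i in step1.
set K1 := \sum_i v1 i in step1. set K2 := \sum_i v2 i in step1.
set L1 := \sum_i w1 i in step1. set L2 := \sum_i w2 i in step1.
have hr2 : \sum_i r i ^+ 2 = 2.
  under eq_bigr => i _ do rewrite /r nrm_sq.
  by rewrite big_split /= hx hy.
have hz1 : \sum_i r i * v1 i = 0.
  transitivity (\sum_i (x i ^+ 2 - y i ^+ 2)); last by rewrite sumrB hx hy subrr.
  by apply: eq_bigr => i _; rewrite /r /v1 rV1.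
have hz2 : \sum_i r i * v2 i = 0.
  transitivity (\sum_i 2 * (x i * y i)); last by rewrite -mulr_sumr hxy mulr0.
  by apply: eq_bigr => i _; rewrite /r /v2 rV2.
have hpq : forall i, p i ^+ 2 + q i ^+ 2 <= 1.
  move=> i; have [h|h] := eqVneq (r i) 0.
    rewrite /p /q /P1 /Q1 /ca /sa -/(r i) h invr0 !mulr0 expr0n /= subr0 !expr0n /= addr0; exact: ler01.
  by rewrite /p /q PQ1.
pose t := S / 2.
pose F i := (K1 ^+ 2 + K2 ^+ 2) * r i ^+ 2 - 4 * K1 * v1 i - 4 * K2 * v2 i
   + 4 * t * K1 * (r i * v1 i) + 4 * t * K2 * (r i * v2 i) + 4 - 8 * t * r i
   + 4 * t ^+ 2 * r i ^+ 2.
have perI : forall i, 0 <= F i.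
  move=> i; rewrite /F.
  have -> : (K1 ^+ 2 + K2 ^+ 2) * r i ^+ 2 - 4 * K1 * v1 i - 4 * K2 * v2 i
   + 4 * t * K1 * (r i * v1 i) + 4 * t * K2 * (r i * v2 i) + 4 - 8 * t * r i
   + 4 * t ^+ 2 * r i ^+ 2
   = (r i * K1 - 2 * (1 - t * r i) * p i) ^+ 2 + (r i * K2 - 2 * (1 - t * r i) * q i) ^+ 2
     + 4 * (1 - t * r i) ^+ 2 * (1 - (p i ^+ 2 + q i ^+ 2)).
    by rewrite /v1 /v2 /V1 /V2 -/(p i) -/(q i) -/(r i); ring.
  apply: addr_ge0; first by apply: addr_ge0; apply: sqr_ge0.
  apply: mulr_ge0; first by apply: mulr_ge0; [lra | apply: sqr_ge0].
  by rewrite subr_ge0.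
have sumI : 0 <= \sum_i F i by apply: sumr_ge0 => i _; apply: perI.
rewrite /F !(big_split, sumrB, sumrN) /= -!mulr_sumr sumr_const card_ord in sumI.
rewrite hr2 hz1 hz2 -/S -/K1 -/K2 in sumI.
have sumS : 0 <= \sum_i (n%:R * r i - S) ^+ 2 by apply: sumr_ge0 => i _; apply: sqr_ge0.
have eS : forall i, (n%:R * r i - S) ^+ 2 = n%:R ^+ 2 * r i ^+ 2 - 2 * n%:R * S * r i + S ^+ 2
  by move=> i; ring.
rewrite (eq_bigr _ (fun i _ => eS i)) in sumS.
rewrite !(big_split, sumrB, sumrN) /= -!mulr_sumr sumr_const card_ord hr2 -/S -mulr_natr in sumS.
have npos : 0 < n%:R :> R.
  case: n x y hx hy hxy {r v1 v2 w1 w2 p q step1 S K1 K2 L1 L2 hr2 hz1 hz2 hpq t F perI sumI sumS eS} => [|m] x y hx.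
    by move: hx; rewrite big_ord0 => /eqP; rewrite eq_sym oner_eq0.
  by rewrite ltr0Sn.
have hS : S ^+ 2 <= 2 * n%:R.
  nra.
have hL : 0 <= L1 ^+ 2 + L2 ^+ 2 by apply: addr_ge0; apply: sqr_ge0.
rewrite -mulr_natr /t in sumI.
nra.
Qed.

End Key4.

Section Key5.
Variable R : realType.
Variable n : nat.

Lemma graph_bound (e : rel 'I_n) (x y : 'I_n -> R) : irreflexive e ->
  \sum_i x i ^+ 2 = 1 -> \sum_i y i ^+ 2 = 1 -> \sum_i x i * y i = 0 ->
  \sum_i x i = 0 -> \sum_i y i = 0 ->
  \sum_i \sum_j (e i j)%:R * (x i * x j + y i * y j) <= 2/3 * n%:R - 2.
Proof.
move=> irr hx hy hxy sx sy.
pose P i j := x i * x j + y i * y j.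
have step : \sum_i \sum_j (e i j)%:R * P i j <=
   \sum_i \sum_j ((`|P i j| + P i j) / 2 - (i == j)%:R * P i j).
  apply: ler_sum => i _; apply: ler_sum => j _.
  have [->|nij] := eqVneq i j.
    rewrite irr mul0r mul1r subr_ge0 ler_pdivlMr // mulr2n mulrDr mulr1.
    by rewrite lerD2r ler_norm.
  rewrite mul0r subr0; case: (e i j); last first.
    by rewrite mul0r divr_ge0 // -lerBlDr sub0r -normrN ler_norm.
  rewrite mul1r ler_pdivlMr // mulr2n mulrDr mulr1 lerD2r; exact: ler_norm.
have T := sumT hx hy hxy.
have hP : \sum_i \sum_j P i j = 0.
  rewrite /P; under eq_bigr => i _ do rewrite big_split /=.
  by rewrite big_split /= !dsum_prod sx sy !mul0r addr0.
have hD : \sum_i \sum_j (i == j)%:R * P i j = 2.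
  transitivity (\sum_i P i i).
    apply: eq_bigr => i _; rewrite (bigD1 i) //= eqxx mul1r big1 ?addr0 //.
    by move=> j /negPf; rewrite eq_sym => ->; rewrite mul0r.
  rewrite /P big_split /=; under eq_bigr => i _ do rewrite -expr2.
  by under [X in _ + X = _]eq_bigr => i _ do rewrite -expr2; rewrite hx hy.
have E : \sum_i \sum_j ((`|P i j| + P i j) / 2 - (i == j)%:R * P i j)
   = (\sum_i \sum_j `|P i j| + \sum_i \sum_j P i j) / 2
     - \sum_i \sum_j (i == j)%:R * P i j.
  under eq_bigr => i _ do rewrite sumrB -mulr_suml big_split /=.
  by rewrite sumrB -mulr_suml big_split.
rewrite E hP hD addr0 in step.
rewrite /P in step; lra.
Qed.

End Key5.


Section Spec.
Variable R : realType.
Variable n : nat.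
Implicit Types A M : 'M[R]_n.+1.

Lemma horner_mx_sym A p : A^T = A -> (horner_mx A p)^T = horner_mx A p.
Proof.
move=> sA; elim/poly_ind: p => [|p c IH]; first by rewrite rmorph0 trmx0.
rewrite rmorphD rmorphM /= horner_mx_X horner_mx_C linearD /= tr_scalar_mx.
rewrite [(_ * _)^T]trmx_mul IH sA.
congr (_ + _).
have := congr1 (horner_mx A) (mulrC 'X p); rewrite !rmorphM /= horner_mx_X.
by [].
Qed.

Lemma sym_sq0 M : M^T = M -> M * M = 0 -> M = 0.
Proof.
move=> sM MM; apply/matrixP => i j; rewrite mxE.
have : (M *m M^T) i i = 0 by rewrite sM; have := MM; rewrite /GRing.mul /= => ->; rewrite mxE.
rewrite mxE => /eqP; rewrite psumr_eq0 => [/allP H|k _]; last first.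
  by rewrite mxE -expr2 sqr_ge0.
have := H j (mem_index_enum _); rewrite mxE -expr2 sqrf_eq0 => /implyP.
by move=> /(_ isT) /eqP.
Qed.

Lemma trmx_X M k : M^T = M -> (M ^+ k)^T = M ^+ k.
Proof.
move=> sM; elim: k => [|k IH]; first by rewrite expr0 trmx1.
rewrite exprS [(_ * _)^T]trmx_mul IH sM.
by change (M ^+ k * M = M * M ^+ k); rewrite -exprSr exprS.
Qed.

Lemma sym_nilp M k : M^T = M -> M ^+ k.+1 = 0 -> M = 0.
Proof.
move=> sM; elim: k => [|k IH]; first by rewrite expr1.
move=> Mk; apply: IH; apply: sym_sq0; first exact: trmx_X.
rewrite -exprD.
have -> : (k.+1 + k.+1 = k.+2 + k)%N by rewrite addSn addnS.
by rewrite exprD Mk mul0r.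
Qed.

End Spec.

Section Spec2.
Variable R : realType.

Lemma prod_dvd_exp (s t : seq R) : {subset s <= t} ->
  \prod_(x <- s) ('X - x%:P) %| (\prod_(x <- t) ('X - x%:P)) ^+ size s.
Proof.
elim: s => [|a s IH] sub; first by rewrite big_nil dvd1p.
rewrite big_cons /= exprS; apply: dvdp_mul.
  by rewrite dvdp_XsubCl root_prod_XsubC; apply: sub; rewrite mem_head.
by apply: IH => x xs; apply: sub; rewrite inE xs orbT.
Qed.

Variable n : nat.

Lemma sym_diagonalizable (A : 'M[R]_n.+1) (s : seq R) : A^T = A ->
  char_poly A = \prod_(x <- s) ('X - x%:P) -> diagonalizable A.
Proof.
move=> sA hc; apply/diagonalizableP; exists (undup s); first exact: undup_uniq.
apply: mxminpoly_min.
set p := \prod_(x <- undup s) ('X - x%:P).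
have hs : size s = n.+1.
  by have := size_char_poly A; rewrite hc size_prod_XsubC => -[].
apply: (@sym_nilp _ _ _ n); first exact: horner_mx_sym.
rewrite -rmorphXn /=.
have sub : {subset s <= undup s} by move=> x; rewrite mem_undup.
have := prod_dvd_exp sub.
rewrite -hc hs => /dvdpP [q ->].
by rewrite rmorphM /= Cayley_Hamilton mulr0.
Qed.

Lemma char_poly_similar (P M : 'M[R]_n) : P \in unitmx ->
  char_poly (invmx P *m M *m P) = char_poly M.
Proof.
move=> Pu; rewrite /char_poly /char_poly_mx.
set f := @polyC R.
have E : 'X%:M - map_mx f (invmx P *m M *m P)
   = map_mx f (invmx P) *m ('X%:M - map_mx f M) *m map_mx f P.
  rewrite mulmxBr mulmxBl !map_mxM; congr (_ - _).
  by rewrite -mulmxA -scalar_mxC mulmxA -map_mxM mulVmx // map_mx1 mul1mx.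
rewrite E !det_mulmx !det_map_mx mulrC mulrA -rmorphM -det_mulmx mulmxV //.
by rewrite det1 rmorph1 mul1r.
Qed.

End Spec2.

Section Spec3.
Variable R : realType.

Lemma spectral_real n (A : 'M[R]_n.+1) (s : seq R) : A^T = A ->
  char_poly A = \prod_(x <- s) ('X - x%:P) ->
  exists P : 'M[R]_n.+1, exists D : 'rV[R]_n.+1,
    [/\ P \in unitmx, P *m A = diag_mx D *m P &
        perm_eq s [seq D 0 i | i <- enum 'I_n.+1]].
Proof.
move=> sA hc; have [P Pu] := sym_diagonalizable sA hc.
move=> /(similar_diagLR Pu) [D hA]; rewrite conjVmx // in hA.
exists P, D; split => //.
  by rewrite hA !mulmxA mulmxV // mul1mx.
apply: prod_XsubC_eq; rewrite -hc hA char_poly_similar //.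
rewrite char_poly_trig ?diag_mx_is_trig // big_map big_enum /=.
by apply: eq_bigr => i _; rewrite mxE eqxx mulr1n.
Qed.

Lemma quad_form m (c : 'rV[R]_m) (X : 'M[R]_m) :
  (c *m X *m c^T) 0 0 = \sum_i \sum_j c 0 i * X i j * c 0 j.
Proof.
rewrite mxE exchange_big /=; apply: eq_bigr => j _.
rewrite [(c *m X) 0 j]mxE [c^T j 0]mxE mulr_suml; apply: eq_bigr => i _; by [].
Qed.

Lemma rayleigh m (A P : 'M[R]_m) (D : 'rV[R]_m) (t : R) (c : 'rV[R]_m) :
  A^T = A -> P *m A = diag_mx D *m P ->
  (forall i, c 0 i != 0 -> t <= D 0 i) ->
  t * ((c *m P) *m (c *m P)^T) 0 0 <= ((c *m P) *m A *m (c *m P)^T) 0 0.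
Proof.
move=> sA hPA hc.
set G := P *m P^T.
have sG : G^T = G by rewrite /G trmx_mul trmxK.
have hcomm : forall i j, D 0 i * G i j = G i j * D 0 j.
  have : (diag_mx D *m G)^T = diag_mx D *m G.
    rewrite /G mulmxA -hPA trmx_mul [(P *m A)^T]trmx_mul trmxK sA mulmxA //.
  rewrite trmx_mul sG tr_diag_mx => /matrixP H i j.
  by have := H i j; rewrite mul_diag_mx mul_mx_diag !mxE => ->.
pose e := \row_i Num.sqrt (D 0 i - t).
have E1 : ((c *m P) *m A *m (c *m P)^T) 0 0 - t * ((c *m P) *m (c *m P)^T) 0 0
   = (c *m (\matrix_(i, j) ((D 0 i - t) * G i j)) *m c^T) 0 0.
  have -> : (c *m P) *m A *m (c *m P)^T = c *m (P *m A *m P^T) *m c^T.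
    by rewrite trmx_mul !mulmxA.
  have -> : (c *m P) *m (c *m P)^T = c *m G *m c^T by rewrite trmx_mul !mulmxA.
  have -> : t * (c *m G *m c^T) 0 0 = (c *m (t *: G) *m c^T) 0 0.
    by rewrite -scalemxAr -scalemxAl [in RHS]mxE.
  rewrite -[X in X - _]/((c *m (P *m A *m P^T) *m c^T) 0 0).
  have -> : forall X Y : 'M[R]_(1, 1), X 0 0 - Y 0 0 = (X - Y) 0 0 by move=> X Y; rewrite !mxE.
  rewrite -mulmxBl -mulmxBr; congr ((c *m _ *m _) 0 0).
  apply/matrixP => i j; rewrite hPA -mulmxA mul_diag_mx !mxE.
  by rewrite mulrBl.
have E2 : (c *m (\matrix_(i, j) ((D 0 i - t) * G i j)) *m c^T) 0 0
   = ((c *m diag_mx e *m P) *m (c *m diag_mx e *m P)^T) 0 0.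
  have -> : (c *m diag_mx e *m P) *m (c *m diag_mx e *m P)^T
     = c *m (diag_mx e *m G *m diag_mx e) *m c^T.
    by rewrite /G trmx_mul trmx_mul tr_diag_mx !mulmxA.
  clearbody G.
  rewrite !quad_form; apply: eq_bigr => i _; apply: eq_bigr => j _.
  rewrite mul_mx_diag mul_diag_mx !mxE.
  have [ci|ci] := eqVneq (c 0 i) 0; first by rewrite ci !mul0r.
  have [cj|cj] := eqVneq (c 0 j) 0; first by rewrite cj !mulr0.
  have [gij|gij] := eqVneq (G i j) 0; first by rewrite gij !(mulr0, mul0r).
  have hi := hc _ ci; have hj := hc _ cj.
  have eij : D 0 i = D 0 j.
    by apply: (mulIf gij); rewrite hcomm mulrC.
  rewrite -eij; congr (_ * _ * _).
  by rewrite mulrAC -expr2 sqr_sqrtr ?subr_ge0.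
have : 0 <= ((c *m diag_mx e *m P) *m (c *m diag_mx e *m P)^T) 0 0.
  rewrite mxE; apply: sumr_ge0 => k _; rewrite [X in _ * X]mxE -expr2; exact: sqr_ge0.
rewrite -E2 -E1 subr_ge0 //.
Qed.

End Spec3.


Section Glue.
Variable R : realType.

Lemma ker_nonzero m k (M : 'M[R]_(m, k)) : (k < m)%N ->
  exists2 v : 'rV[R]_m, v != 0 & v *m M = 0.
Proof.
move=> km.
have : kermx M != 0.
  rewrite -mxrank_eq0 mxrank_ker subn_eq0 -ltnNge.
  exact: leq_ltn_trans (rank_leq_col M) km.
case/rowV0Pn => v; rewrite sub_kermx => /eqP vM vn0.
by exists v.
Qed.

Lemma norm_pos m (w : 'rV[R]_m) : w != 0 -> 0 < (w *m w^T) 0 0.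
Proof.
move=> wn0.
have nn : forall k : 'I_m, true -> 0 <= w 0 k * w^T k 0.
  by move=> k _; rewrite [X in _ * X]mxE -expr2 sqr_ge0.
rewrite mxE lt_def; apply/andP; split; last by apply: sumr_ge0.
apply/negP => /eqP /psumr_eq0P H; have {}H := H nn.
move/eqP: wn0; apply; apply/matrixP => i j; rewrite ord1 mxE.
have := H j isT; rewrite [X in _ * X]mxE -expr2 => /eqP; rewrite sqrf_eq0 => /eqP.
by [].
Qed.

Lemma normalize m (w : 'rV[R]_m) : w != 0 ->
  let a := (Num.sqrt ((w *m w^T) 0 0))^-1 in
  ((a *: w) *m (a *: w)^T) 0 0 = 1.
Proof.
move=> wn0 a; have Np := norm_pos wn0.
rewrite linearZ /= -scalemxAl -scalemxAr mxE [X in _ * X]mxE.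
rewrite /a mulrA -expr2 exprVn sqr_sqrtr ?ltW // mulVf //.
by rewrite gt_eqF.
Qed.

Lemma count3 (s : seq R) : sorted >=%R s -> (3 <= size s)%N ->
  (3 <= count (fun x : R => (nth 0 s 2 <= x)%R) s)%N.
Proof.
case: s => [|a [|b [|c r]]] //= /andP [hab /andP [hbc _]] _.
rewrite lexx /=.
have -> : c <= b by [].
have -> : c <= a by apply: le_trans hbc hab.
by [].
Qed.

Lemma dot_sum m (u v : 'rV[R]_m) : (u *m v^T) 0 0 = \sum_i u 0 i * v 0 i.
Proof. by rewrite mxE; apply: eq_bigr => i _; rewrite mxE. Qed.

Lemma one_sum m (u : 'rV[R]_m) : (u *m (const_mx 1 : 'M_(m, 1))) 0 0 = \sum_i u 0 i.
Proof. by rewrite mxE; apply: eq_bigr => i _; rewrite mxE mulr1. Qed.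

End Glue.

End Aux.
Import Aux.

Theorem theorem1p3 (R : realType) (n : nat) (e : rel 'I_n) (s : seq R) :
  (3 <= n)%N -> simple_graph e ->
  eigenvalues_desc (adjmx R e) s ->
  nth 0 s 2 <= n%:R / 3 - 1.
Proof.
move=> n3 [esym eirr] [ssort hc].
case: n e esym eirr hc n3 => [//|n] e esym eirr hc n3.
set A := adjmx R e in hc.
have sA : A^T = A by apply/matrixP => i j; rewrite !mxE esym.
have [P [D [Pu hPA hperm]]] := spectral_real sA hc.
set t := nth 0 s 2.
have hs : size s = n.+1.
  by have := size_char_poly A; rewrite hc size_prod_XsubC => -[].
pose pr := fun x : R => t <= x.
have cnt : (3 <= count pr s)%N by apply: count3; rewrite // hs.
pose Dl := [seq D 0 i | i <- enum 'I_n.+1].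
have cntD : (3 <= count pr Dl)%N.
  by rewrite -(permP hperm).
pose L := [seq i <- enum 'I_n.+1 | t <= D 0 i].
have sizeL : (3 <= size L)%N by rewrite size_filter -count_map.
have uL : uniq L by rewrite filter_uniq // enum_uniq.
pose idx (k : 'I_3) := nth ord0 L k.
have idxD : forall k, t <= D 0 (idx k).
  move=> k; have : idx k \in L by apply: mem_nth; apply: leq_trans (ltn_ord k) sizeL.
  by rewrite mem_filter => /andP [].
have idx_eq : forall k l, (idx k == idx l) = (k == l).
  move=> k l; rewrite /idx nth_uniq //; try by apply: leq_trans (ltn_ord _) sizeL.
pose Sel : 'M[R]_(3, n.+1) := \matrix_(k, j) (j == idx k)%:R.
have SelSel : Sel *m Sel^T = 1%:M.
  apply/matrixP => k l; rewrite !mxE (bigD1 (idx k)) //= big1 ?addr0.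
    by rewrite !mxE eqxx mul1r idx_eq eq_sym.
  by move=> j /negPf jk; rewrite !mxE jk mul0r.
have rkSel : \rank Sel = 3.
  apply/eqP; rewrite eqn_leq rank_leq_row /=.
  by have := mxrankM_maxl Sel Sel^T; rewrite SelSel mxrank1.
pose Q := Sel *m P.
have Qfree : row_free Q by rewrite /row_free mxrankMfree ?row_free_unit // rkSel.
have ray : forall g : 'rV[R]_3,
    t * ((g *m Q) *m (g *m Q)^T) 0 0 <= ((g *m Q) *m A *m (g *m Q)^T) 0 0.
  move=> g; rewrite /Q mulmxA; apply: (rayleigh sA hPA) => j.
  rewrite mxE; case: (pickP (fun k => j == idx k)) => [k /eqP -> _ | none].
    exact: idxD.
  by rewrite big1 ?eqxx // => k _; rewrite mxE none mulr0.
pose ones : 'M[R]_(n.+1, 1) := const_mx 1.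
have [g1 g1n0 g1k] := @ker_nonzero _ _ _ (Q *m ones) isT.
pose u1 := g1 *m Q.
have u1n0 : u1 != 0 by rewrite /u1 mulmx_free_eq0.
pose a1 := (Num.sqrt ((u1 *m u1^T) 0 0))^-1.
pose x := (a1 *: g1) *m Q.
have hxx : (x *m x^T) 0 0 = 1 by rewrite /x -scalemxAl; exact: normalize.
have hx1 : x *m ones = 0 by rewrite /x -!scalemxAl -mulmxA g1k scaler0.
pose M2 : 'M[R]_(3, 1 + 1) := row_mx (Q *m ones) (Q *m x^T).
have [g2 g2n0 g2k] := @ker_nonzero _ _ _ M2 isT.
move: g2k; rewrite mul_mx_row => /eqP; rewrite row_mx_eq0 => /andP [/eqP g2a /eqP g2b].
pose u2 := g2 *m Q.
have u2n0 : u2 != 0 by rewrite /u2 mulmx_free_eq0.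
pose a2 := (Num.sqrt ((u2 *m u2^T) 0 0))^-1.
pose y := (a2 *: g2) *m Q.
have hyy : (y *m y^T) 0 0 = 1 by rewrite /y -scalemxAl; exact: normalize.
have hy1 : y *m ones = 0 by rewrite /y -!scalemxAl -mulmxA g2a scaler0.
have hyx : y *m x^T = 0 by rewrite /y -!scalemxAl -mulmxA g2b scaler0.
have rx := ray (a1 *: g1); rewrite -/x hxx mulr1 in rx.
have ry := ray (a2 *: g2); rewrite -/y hyy mulr1 in ry.
rewrite quad_form in rx; rewrite quad_form in ry.
have GB := @graph_bound R n.+1 e (fun i => x 0 i) (fun i => y 0 i) eirr.
rewrite -dot_sum hxx -dot_sum hyy in GB.
have sxy : \sum_i x 0 i * y 0 i = 0.
  by rewrite -(eq_bigr _ (fun i _ => mulrC (y 0 i) (x 0 i))) -dot_sum hyx mxE.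
have sx : \sum_i x 0 i = 0 by rewrite -one_sum hx1 mxE.
have sy : \sum_i y 0 i = 0 by rewrite -one_sum hy1 mxE.
have {}GB := GB erefl erefl sxy sx sy.
have split : \sum_i \sum_j (e i j)%:R * (x 0 i * x 0 j + y 0 i * y 0 j)
  = \sum_i \sum_j x 0 i * A i j * x 0 j + \sum_i \sum_j y 0 i * A i j * y 0 j.
  rewrite -big_split /=; apply: eq_bigr => i _; rewrite -big_split /=.
  by apply: eq_bigr => j _; rewrite !mxE; ring.
rewrite split in GB.
lra.
Qed.
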